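(* For every combinatorial auction with $d$-SOS valuations ($d\ge1$) over single-dimensional signals $s_i\in\{0,1,\dots,k-1\}$ ($k\ge2$), the mechanism that runs Random Threshold with probability $\frac{(k-1)d}{d(k+1)+2}$ and Random Sampling otherwise is universally ex-post IC-IR and gives a $(d(k+1)+2)$-approximation to the optimal social welfare.
   Context: Setting: $n$ agents, $m$ items; agent $i$ has private signal $s_i$; value for bundle $T$ is $v_{iT}(\mathbf{s})\ge0$, public, weakly increasing in each coordinate, strictly in $s_i$; each $v_{iT}$ is $d$-SOS: for every coordinate $j$, $s_j$, $\delta\ge0$, $\mathbf{s}'_{-j}\le\mathbf{s}_{-j}$ coordinate-wise, $d\big(v(\mathbf{s}'_{-j},s_j+\delta)-v(\mathbf{s}'_{-j},s_j)\big)\ge v(\mathbf{s}_{-j},s_j+\delta)-v(\mathbf{s}_{-j},s_j)$. Allocations assign disjoint bundles. Random Threshold: choose $\ell$ uniformly in $\{1,\dots,k-1\}$; $N_{\ge\ell}=\{i:s_i\ge\ell\}$, $N_{<\ell}$ the rest; for $i\in N_{\ge\ell}$, $\bar v_{iT}=v_{iT}(\mathbf{s}_{N_{<\ell}},\boldsymbol{\ell}_{N_{\ge\ell}})$, else $0$; allocate a $\bar v$-welfare-maximizing allocation among $N_{\ge\ell}$; agent receiving $\bar T_i$ pays $v_{i\bar T_i}(\mathbf{s}_{-i},\ell-1)$. Random Sampling: split agents uniformly at random into $A,B$; for $i\in B$, $\tilde v_{iT}=v_{iT}(\mathbf{s}_A,\mathbf{0}_B)$, for $i\in A$, $0$; allocate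 a $\tilde v$-welfare-maximizing allocation among $B$; no payments. *)

(* Defs.v *)
From HB Require Import structures.
From mathcomp Require Import all_boot all_order all_algebra.
Set Implicit Arguments. Unset Strict Implicit. Unset Printing Implicit Defensive.
Import Order.TTheory GRing.Theory Num.Theory.
Local Open Scope ring_scope.

Section Auction.
Variables (R : realFieldType) (n m : nat).

(* A (reported or true) signal profile; signals are naturals, the signal
   space {0,...,k-1} is enforced by [in_range k]. *)
Definition profile := {ffun 'I_n -> nat}.
Definition in_range (k : nat) (s : profile) := forall i, (s i < k)%N.
Definition upd (s : profile) (j : 'I_n) (x : nat) : profile :=
  [ffun i => if i == j then x else s i].

Definition valuation := 'I_n -> {set 'I_m} -> profile -> R.

Definition allocation := {ffun 'I_n -> {set 'I_m}}.
Definition feasible (N : {set 'I_n}) (X : allocation) :=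
  (forall i, i \notin N -> X i = set0) /\
  (forall i j, i != j -> [disjoint X i & X j]).
Definition welfare (u : 'I_n -> {set 'I_m} -> R) (X : allocation) : R :=
  \sum_i u i (X i).

(* A (deterministic) tie-breaking rule picking an allocation among N
   given the valuations u; it must be welfare maximizing. *)
Definition selector := {set 'I_n} -> ('I_n -> {set 'I_m} -> R) -> allocation.
Definition welfare_maximizer (sel : selector) :=
  forall N u, feasible N (sel N u) /\
    (forall X, feasible N X -> welfare u X <= welfare u (sel N u)).

Definition nonneg_val (k : nat) (v : valuation) :=
  forall i T s, in_range k s -> 0 <= v i T s.
Definition empty_zero (v : valuation) := forall i s, v i set0 s = 0.
Definition monotone_val (k : nat) (v : valuation) :=
  forall i T s j x y, in_range k s -> (x <= y < k)%N ->
    v i T (upd s j x) <= v i T (upd s j y).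
Definition strict_own (k : nat) (v : valuation) :=
  forall i T s x y, T != set0 -> in_range k s -> (x < y < k)%N ->
    v i T (upd s i x) < v i T (upd s i y).
(* d-SOS: with x = s_j and y = s_j + delta *)
Definition SOS (k : nat) (d : R) (v : valuation) :=
  forall i T s s' j x y, in_range k s -> in_range k s' ->
    (forall l, l != j -> (s' l <= s l)%N) -> (x <= y < k)%N ->
    v i T (upd s j y) - v i T (upd s j x) <=
      d * (v i T (upd s' j y) - v i T (upd s' j x)).

Definition outcome := (allocation * {ffun 'I_n -> R})%type.
Definition mechanism := profile -> outcome.

Definition random_threshold (sel : selector) (v : valuation) (l : nat) : mechanism :=
  fun r =>
  let N := [set i | (l <= r i)%N] in
  let pl := [ffun i => if (l <= r i)%N then l else r i] : profile in
  let vbar := fun j T => if j \in N then v j T pl else 0 in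
  let X := sel N vbar in
  (X, [ffun i => if i \in N then v i (X i) (upd r i l.-1) else 0]).

Definition random_sampling (sel : selector) (v : valuation) (A : {set 'I_n}) : mechanism :=
  fun r =>
  let q := [ffun i => if i \in A then r i else 0%N] : profile in
  let vt := fun j T => if j \in ~: A then v j T q else 0 in
  (sel (~: A) vt, [ffun => 0]).

Definition utility (v : valuation) (s : profile) (i : 'I_n) (o : outcome) : R :=
  v i (o.1 i) s - o.2 i.
Definition social_welfare (v : valuation) (s : profile) (o : outcome) : R :=
  \sum_i v i (o.1 i) s.

Definition ex_post_IC_IR (k : nat) (v : valuation) (M : mechanism) :=
  forall s, in_range k s -> forall i,
    0 <= utility v s i (M s) /\
    (forall x, (x < k)%N -> utility v s i (M (upd s i x)) <= utility v s i (M s)).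

Definition prob_RT (k : nat) (d : R) : R :=
  ((k.-1)%:R * d) / (d * (k.+1)%:R + 2).

(* expected welfare of the mixture: l uniform in {1..k-1}, A uniform subset *)
Definition expected_welfare (sel : selector) (v : valuation) (k : nat) (d : R)
    (s : profile) : R :=
  prob_RT k d * ((k.-1)%:R^-1 *
     \sum_(1 <= l < k) social_welfare v s (random_threshold sel v l s))
  + (1 - prob_RT k d) * ((2 ^+ n)^-1 *
     \sum_(A : {set 'I_n}) social_welfare v s (random_sampling sel v A s)).

End Auction.

(* Main.v *)
Require Import Defs.
From HB Require Import structures.
From mathcomp Require Import all_boot all_order all_algebra.
From mathcomp Require Import zify ring lra.
Set Implicit Arguments. Unset Strict Implicit. Unset Printing Implicit Defensive.
Import Order.TTheory GRing.Theory Num.Theory.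
Local Open Scope ring_scope.

Section Proofs.
Variables (R : realFieldType) (n m k : nat) (d : R) (v : valuation R n m).
Hypotheses (hd : 1 <= d) (hnn : nonneg_val k v) (he : empty_zero v)
  (hmono : monotone_val k v) (hsos : SOS k d v).

Definition mix (z t : profile n) (S : {set 'I_n}) : profile n :=
  [ffun j => if j \in S then t j else z j].

Lemma upd_id (s : profile n) j : upd s j (s j) = s.
Proof. by apply/ffunP => l; rewrite ffunE; case: eqP => // ->. Qed.

Lemma upd_upd (s : profile n) j x y : upd (upd s j x) j y = upd s j y.
Proof. by apply/ffunP => l; rewrite !ffunE; case: eqP. Qed.

Lemma upd_in_range (s : profile n) j x : in_range k s -> (x < k)%N -> in_range k (upd s j x).
Proof. by move=> hs hx l; rewrite ffunE; case: eqP. Qed.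

Lemma mix_in_range (z t : profile n) S : in_range k z -> in_range k t -> in_range k (mix z t S).
Proof. by move=> hz ht l; rewrite ffunE; case: ifP. Qed.

Lemma mix_le (z t : profile n) (S S' : {set 'I_n}) : (forall l, z l <= t l)%N -> S \subset S' ->
  forall l, (mix z t S l <= mix z t S' l)%N.
Proof.
move=> hzt hSS l; rewrite !ffunE.
case: ifP => hl; first by rewrite (subsetP hSS _ hl).
by case: ifP.
Qed.

Lemma mix_set1U (z t : profile n) S D j :
  mix z t (S :|: (j |: D)) = upd (mix z t (S :|: D)) j (t j).
Proof.
apply/ffunP => l; rewrite !ffunE !inE.
by case: eqP => [->|_]; rewrite ?orbT.
Qed.

Lemma mono_mix (z t : profile n) i T S (r : seq 'I_n) :
  in_range k z -> in_range k t -> (forall l, z l <= t l)%N ->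
  v i T (mix z t S) <= v i T (mix z t (S :|: [set x in r])).
Proof.
move=> hz ht hzt; elim: r => [|j r IH].
  by have -> : S :|: [set x in [::]] = S by apply/setP=> x; rewrite !inE orbF.
have -> : [set x in j :: r] = j |: [set x in r].
  by apply/setP=> x; rewrite !inE.
rewrite mix_set1U; apply: le_trans IH _.
set b := mix z t (S :|: [set x in r]).
rewrite -{1}(upd_id b j); apply: hmono; first exact: mix_in_range.
rewrite ht andbT /b ffunE; by case: ifP.
Qed.

Lemma mono_prof i T (p q : profile n) : in_range k p -> in_range k q ->
  (forall l, p l <= q l)%N -> v i T p <= v i T q.
Proof.
move=> hp hq hpq.
have := @mono_mix p q i T set0 (enum [set: 'I_n]) hp hq hpq.
have -> : mix p q set0 = p by apply/ffunP=> l; rewrite ffunE inE.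
suff -> : mix p q (set0 :|: [set x in enum [set: 'I_n]]) = q by [].
by apply/ffunP=> l; rewrite ffunE !inE mem_enum inE.
Qed.

Lemma sos_mix (z t : profile n) i T (S S' : {set 'I_n}) (r : seq 'I_n) :
  in_range k z -> in_range k t -> (forall l, z l <= t l)%N ->
  uniq r -> S \subset S' -> (forall x, x \in r -> x \notin S') ->
  v i T (mix z t (S' :|: [set x in r])) - v i T (mix z t S') <=
  d * (v i T (mix z t (S :|: [set x in r])) - v i T (mix z t S)).
Proof.
move=> hz ht hzt; elim: r => [|j r IH].
  have h0 : forall S0 : {set 'I_n}, S0 :|: [set x in [::]] = S0 by move=> S0; apply/setP=> x; rewrite !inE orbF.
  by move=> *; rewrite !h0 !subrr mulr0 lexx.
move=> /= /andP[hjr hu] hSS hdis.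
have -> : [set x in j :: r] = j |: [set x in r].
  by apply/setP=> x; rewrite !inE.
rewrite !mix_set1U.
have hdis' : forall x, x \in r -> x \notin S' by move=> x hx; apply: hdis; rewrite inE hx orbT.
have IH' := IH hu hSS hdis'.
set b' := mix z t (S' :|: [set x in r]) in IH' *.
set b := mix z t (S :|: [set x in r]) in IH' *.
have hjS' : j \notin S' by apply: hdis; rewrite inE eqxx.
have hjS : j \notin S by apply: contra hjS'; apply: (subsetP hSS).
have hb'j : b' j = z j by rewrite /b' ffunE !inE (negbTE hjS') (negbTE hjr).
have hbj : b j = z j by rewrite /b ffunE !inE (negbTE hjS) (negbTE hjr).
have hstep : v i T (upd b' j (t j)) - v i T b' <= d * (v i T (upd b j (t j)) - v i T b).
  rewrite -{2}(upd_id b' j) -{2}(upd_id b j) hb'j hbj.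
  apply: hsos; try exact: mix_in_range.
  - move=> l _; apply: mix_le => //; exact: setSU.
  - by rewrite hzt ht.
have := lerD IH' hstep.
rewrite -mulrDr. have e : forall a b c : R, b - c + (a - b) = a - c by move=> *; rewrite addrC addrA subrK. by rewrite !e.
Qed.


Variable sel : selector R n m.
Hypothesis hsel : welfare_maximizer sel.

Lemma sel_out (N : {set 'I_n}) u (i : 'I_n) : i \notin N -> sel N u i = set0.
Proof. by move=> hi; have [[h _] _] := hsel N u; exact: h. Qed.

Lemma upd_same (s : profile n) i j x : j != i -> upd s i x j = s j.
Proof. by move=> h; rewrite ffunE (negbTE h). Qed.

Lemma upd_at (s : profile n) i x : upd s i x i = x.
Proof. by rewrite ffunE eqxx. Qed.

Lemma RT_alloc_eq l (s : profile n) i x : (l <= x)%N -> (l <= s i)%N ->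
  (random_threshold sel v l (upd s i x)).1 = (random_threshold sel v l s).1.
Proof.
move=> hx hs; rewrite /random_threshold /=.
have eN : [set j | (l <= upd s i x j)%N] = [set j | (l <= s j)%N].
  apply/setP => j; rewrite !inE; case: (eqVneq j i) => [->|hj].
    by rewrite upd_at hx hs.
  by rewrite upd_same.
have epl : [ffun j => if (l <= upd s i x j)%N then l else upd s i x j] =
           [ffun j => if (l <= s j)%N then l else s j] :> profile n.
  apply/ffunP => j; rewrite !ffunE; case: (eqVneq j i) => [->|hj].
    by rewrite hx hs.
  by [].
by rewrite eN epl.
Qed.

Lemma RT_util_in l (s r : profile n) i : (l <= r i)%N ->
  utility v s i (random_threshold sel v l r) =
  v i ((random_threshold sel v l r).1 i) s - v i ((random_threshold sel v l r).1 i) (upd r i l.-1).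
Proof. by move=> h; rewrite /utility /= ffunE inE h. Qed.

Lemma RT_util_out l (s r : profile n) i : ~~ (l <= r i)%N ->
  utility v s i (random_threshold sel v l r) = 0.
Proof.
move=> h; rewrite /utility /= ffunE inE (negbTE h) sel_out ?inE //.
by rewrite he subr0.
Qed.

Lemma RT_IC l : (1 <= l < k)%N -> ex_post_IC_IR k v (random_threshold sel v l).
Proof.
move=> /andP[hl1 hlk] s hs i.
have hl1r : (l.-1 < k)%N by lia.
have hup : in_range k (upd s i l.-1) by apply: upd_in_range.
case: (leqP l (s i)) => hsi.
- have key : 0 <= utility v s i (random_threshold sel v l s).
    rewrite RT_util_in // subr_ge0.
    rewrite -[X in _ <= v _ _ X](upd_id s i); apply: hmono => //.
    by rewrite hs; lia.
  split => // x hx.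
  case: (leqP l x) => hlx.
    rewrite RT_util_in ?upd_at // RT_alloc_eq // upd_upd -RT_util_in //.
  by rewrite RT_util_out ?upd_at -?ltnNge.
- rewrite RT_util_out -?ltnNge //; split => // x hx.
  case: (leqP l x) => hlx.
    rewrite RT_util_in ?upd_at // upd_upd subr_le0.
    rewrite -[X in v _ _ X <= _](upd_id s i); apply: hmono => //.
    by rewrite hl1r; lia.
  by rewrite RT_util_out ?upd_at -?ltnNge.
Qed.

Lemma RS_IC A : ex_post_IC_IR k v (random_sampling sel v A).
Proof.
move=> s hs i.
have u_eq : forall r, utility v s i (random_sampling sel v A r) =
   v i ((random_sampling sel v A r).1 i) s by move=> r; rewrite /utility /= ffunE subr0.
split; first by rewrite u_eq; apply: hnn.
move=> x hx; rewrite !u_eq.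
case: (boolP (i \in A)) => hiA.
  by rewrite /= !sel_out ?inE ?hiA // lexx.
rewrite /=. suff -> : [ffun j => if j \in A then upd s i x j else 0%N] =
          [ffun j => if j \in A then s j else 0%N] :> profile n by [].
apply/ffunP => j; rewrite !ffunE; case: ifP => // hj.
by rewrite (negbTE (_ : j != i)) //; apply: contraNneq hiA => <-.
Qed.


Definition restr (X : allocation n m) (N : {set 'I_n}) : allocation n m :=
  [ffun i => if i \in N then X i else set0].

Lemma restr_feas (X : allocation n m) (N : {set 'I_n}) : feasible [set: 'I_n] X -> feasible N (restr X N).
Proof.
move=> [_ hX]; split.
  by move=> i hi; rewrite ffunE (negbTE hi).
move=> i j hij; rewrite !ffunE.
by case: ifP => _; case: ifP => _; rewrite ?hX // -setI_eq0 ?setI0 ?set0I.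
Qed.

Lemma sel_ge_restr (N : {set 'I_n}) (u : 'I_n -> {set 'I_m} -> R) (X : allocation n m) : feasible [set: 'I_n] X ->
  \sum_i (if i \in N then u i (X i) else u i set0) <= welfare u (sel N u).
Proof.
move=> hX; have [_ h] := hsel N u.
apply: le_trans (h _ (restr_feas N hX)).
rewrite /welfare le_eqVlt; apply/orP; left; apply/eqP.
by apply: eq_bigr => i _; rewrite ffunE; case: ifP.
Qed.

Lemma RT_lb l (s : profile n) (X : allocation n m) : (1 <= l < k)%N -> in_range k s ->
  feasible [set: 'I_n] X ->
  \sum_i (if (l <= s i)%N then v i (X i) (upd s i l) - v i (X i) (upd s i l.-1) else 0)
  <= d * social_welfare v s (random_threshold sel v l s).
Proof.
move=> /andP[hl1 hlk] hs hX.
have hd0 : 0 <= d by apply: le_trans hd; exact: ler01.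
rewrite /social_welfare /random_threshold /=.
set pl := [ffun j => if (l <= s j)%N then l else s j] : profile n.
set N := [set j | (l <= s j)%N].
set vb := fun j T => if j \in N then v j T pl else 0.
have hpl : in_range k pl by move=> j; rewrite ffunE; case: ifP => //; lia.
have hpls : forall j, (pl j <= s j)%N by move=> j; rewrite ffunE; case: ifP.
apply: le_trans (_ : d * \sum_i (if i \in N then vb i (X i) else vb i set0) <= _).
  rewrite mulr_sumr; apply: ler_sum => i _; rewrite /vb inE.
  case: ifP => hi; last by rewrite mulr0.
  have hpli : pl i = l by rewrite ffunE hi.
  have := hsos i (X i) (s:=s) (s':=pl) (j:=i) (x:=l.-1) (y:=l) hs hpl
     (fun j _ => hpls j) (_ : (l.-1 <= l < k)%N).
  have e : upd pl i l = pl by rewrite -[in LHS]hpli upd_id.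
  rewrite e => h; apply: (le_trans (h _)); first by lia.
  rewrite ler_wpM2l // lerBlDr lerDl; apply: hnn; apply: upd_in_range => //; lia.
apply: ler_wpM2l => //; apply: le_trans (sel_ge_restr N vb hX) _; rewrite /welfare.
apply: ler_sum => i _; rewrite /vb.
case: ifP => hi; first by apply: mono_prof.
by apply: hnn.
Qed.


Lemma RS_lb (A : {set 'I_n}) (s : profile n) (X : allocation n m) : in_range k s ->
  feasible [set: 'I_n] X ->
  \sum_i (if i \in ~: A then v i (X i) [ffun j => if j \in A then s j else 0%N] else 0)
  <= social_welfare v s (random_sampling sel v A s).
Proof.
move=> hs hX.
rewrite /social_welfare /random_sampling /=.
set q := [ffun j => if j \in A then s j else 0%N] : profile n.
set vt := fun j T => if j \in ~: A then v j T q else 0.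
have hq : in_range k q by move=> j; rewrite ffunE; case: ifP => //; have := hs j; lia.
have hqs : forall j, (q j <= s j)%N by move=> j; rewrite ffunE; case: ifP.
apply: le_trans (_ : \sum_i (if i \in ~: A then vt i (X i) else vt i set0) <= _).
  by apply: ler_sum => i _; rewrite /vt; case: ifP.
apply: le_trans (sel_ge_restr (~: A) vt hX) _; rewrite /welfare.
apply: ler_sum => i _; rewrite /vt.
case: ifP => hi; first by apply: mono_prof.
by apply: hnn.
Qed.

Definition zp : profile n := [ffun => 0%N].

Definition fS (s : profile n) i T (A : {set 'I_n}) := v i T (mix zp s (A :\ i)).

Lemma zp_range : (0 < k)%N -> in_range k zp.
Proof. by move=> hk j; rewrite ffunE. Qed.

Lemma pair_bound (s : profile n) i T A : (0 < k)%N -> in_range k s ->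
  2 * v i T (upd s i 0) <= (d + 1) * (fS s i T A + fS s i T (~: A)).
Proof.
move=> hk hs.
have hz := zp_range hk.
have hzs : forall l, (zp l <= s l)%N by move=> l; rewrite ffunE.
set D := A :\ i; set C := ~: A :\ i.
have eF : forall P Q : {set 'I_n}, P :|: Q = D :|: C ->
   mix zp s (P :|: Q) = upd s i 0.
  move=> P Q ->; apply/ffunP => l; rewrite !ffunE !inE.
  by case: eqP => // _; case: (l \in A).
have h0 : 0 <= v i T (mix zp s set0) by apply: hnn; exact: mix_in_range.
have h1 := @sos_mix zp s i T set0 C (enum D) hz hs hzs (enum_uniq _) (sub0set _).
have h2 := @sos_mix zp s i T set0 D (enum C) hz hs hzs (enum_uniq _) (sub0set _).
rewrite !set_enum !set0U in h1 h2.
rewrite eF in h1; last by rewrite setUC.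
rewrite eF in h2; last by [].
have hdis1 : forall x, x \in enum D -> x \notin C.
  by move=> x; rewrite mem_enum !inE => /andP[_ ->]; rewrite andbF.
have hdis2 : forall x, x \in enum C -> x \notin D.
  by move=> x; rewrite mem_enum !inE => /andP[_ h]; rewrite (negbTE h) andbF.
have {h1}h1 := h1 hdis1; have {h2}h2 := h2 hdis2.
rewrite /fS -/D -/C.
have hd0 : 0 <= d by apply: le_trans hd; exact: ler01.
have hdf0 : 0 <= d * v i T (mix zp s set0) by apply: mulr_ge0.
move: h1 h2; rewrite !mulrBr => h1 h2.
rewrite mulrDl mulrDr mul1r.
lra.
Qed.


Lemma cardset : #|{set 'I_n}| = (2 ^ n)%N.
Proof.
have -> : (2 ^ n = 2 ^ #|[set: 'I_n]|)%N by rewrite cardsT card_ord.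
rewrite -card_powerset -cardsT; apply: eq_card => A.
by rewrite !inE subsetT.
Qed.

Definition tog (i : 'I_n) (A : {set 'I_n}) := if i \in A then A :\ i else i |: A.

Lemma togK i : involutive (tog i).
Proof.
move=> A; rewrite /tog; case: (boolP (i \in A)) => hA; rewrite !inE eqxx /=.
  by apply/setP => x; rewrite !inE; case: eqP => // ->.
apply/setP => x; rewrite !inE; case: eqP => // ->.
by rewrite (negbTE hA).
Qed.

Lemma sum_bound (s : profile n) i T : (0 < k)%N -> in_range k s ->
  (2 * v i T (upd s i 0)) *+ (2 ^ n) <=
  (d + 1) * (4 * \sum_(A : {set 'I_n}) (if i \in ~: A then fS s i T A else 0)).
Proof.
move=> hk hs.
set f := fS s i T.
set S0 := \sum_(A : {set 'I_n}) _.
have e1 : S0 = \sum_(A : {set 'I_n}) (if i \in A then f A else 0).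
  rewrite /S0 (reindex_inj (inv_inj (togK i))); apply: eq_bigr => A _.
  rewrite /tog; case: (boolP (i \in A)) => hA; rewrite !inE ?eqxx //=.
  rewrite /f /fS; congr (v _ _ (mix _ _ _)); apply/setP => x; rewrite !inE.
  by case: (x == i).
have e2 : S0 + \sum_(A : {set 'I_n}) (if i \in A then f A else 0) =
          \sum_(A : {set 'I_n}) f A.
  rewrite /S0 -big_split; apply: eq_bigr => A _; rewrite inE.
  by case: (i \in A); rewrite /= ?add0r ?addr0.
have e3 : \sum_(A : {set 'I_n}) f A = \sum_(A : {set 'I_n}) f (~: A).
  by rewrite [LHS](reindex_inj (@setC_inj _)).
have -> : 4 * S0 = \sum_(A : {set 'I_n}) (f A + f (~: A)).
  rewrite big_split /= -e3 -e2 -e1; lra.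
rewrite mulr_sumr.
apply: le_trans (_ : \sum_(A : {set 'I_n}) (2 * v i T (upd s i 0)) <= _).
  by rewrite sumr_const cardset.
by apply: ler_sum => A _; apply: pair_bound.
Qed.

Lemma tele (h : nat -> R) x : (x < k)%N ->
  \sum_(1 <= l < k) (if (l <= x)%N then h l - h l.-1 else 0) = h x - h 0%N.
Proof.
move=> hx.
rewrite (@big_cat_nat _ _ _ x.+1) //=.
rewrite [X in _ + X](_ : _ = 0) ?addr0; last first.
  rewrite big_nat_cond big1 // => l /andP[/andP[hl _] _]; by rewrite leqNgt hl.
rewrite (@telescope_sumr_eq _ 1 x.+1 (fun l => h l.-1)) //.
by move=> l /andP[hl1 hl2]; rewrite (_ : (l <= x)%N) /=; last by lia.
Qed.


Lemma approx (s : profile n) : (2 <= k)%N -> in_range k s ->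
  forall X, feasible [set: 'I_n] X ->
  welfare (fun i T => v i T s) X <= (d * (k.+1)%:R + 2) * expected_welfare sel v k d s.
Proof.
move=> hk2 hs X hX.
have hk0 : (0 < k)%N by lia.
rewrite /expected_welfare /prob_RT.
set RT := \sum_(1 <= l < k) social_welfare v s (random_threshold sel v l s).
set RS := \sum_(A : {set 'I_n}) social_welfare v s (random_sampling sel v A s).
set Pa := \sum_i (v i (X i) s - v i (X i) (upd s i 0)).
set Pb := \sum_i v i (X i) (upd s i 0).
have eW : welfare (fun i T => v i T s) X = Pa + Pb.
  by rewrite /welfare /Pa /Pb -big_split; apply: eq_bigr => i _ /=; rewrite subrK.
have hA : Pa <= d * RT.
  rewrite /RT mulr_sumr.
  apply: le_trans (_ : \sum_(1 <= l < k) \sum_i (if (l <= s i)%N then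
      v i (X i) (upd s i l) - v i (X i) (upd s i l.-1) else 0) <= _); last first.
    by apply: ler_sum_nat => l hl; apply: RT_lb.
  rewrite exchange_big /=; apply: ler_sum => i _.
  have := tele (fun l => v i (X i) (upd s i l)) (hs i).
  by rewrite /= upd_id => ->.
have hB : (2 * Pb) *+ (2 ^ n) <= (d + 1) * (4 * RS).
  have h : \sum_i ((2 * v i (X i) (upd s i 0)) *+ 2 ^ n) <=
     \sum_i ((d + 1) * (4 * \sum_(A : {set 'I_n}) (if i \in ~: A then fS s i (X i) A else 0))).
    by apply: ler_sum => i _; apply: sum_bound.
  rewrite /Pb mulr_sumr -sumrMnl; apply: (le_trans h).
  rewrite -mulr_sumr; apply: ler_wpM2l; first by apply: addr_ge0 => //; apply: le_trans hd; exact: ler01.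
  rewrite -mulr_sumr; apply: ler_wpM2l; first by [].
  rewrite exchange_big /=; apply: ler_sum => A _.
  apply: le_trans (RS_lb A hs hX); rewrite le_eqVlt; apply/orP; left; apply/eqP.
  apply: eq_bigr => i _; case: ifP => // hi; rewrite /fS; congr (v _ _ _).
  apply/ffunP => j; rewrite !ffunE !inE; case: eqP => [->|] //=.
  by move: hi; rewrite inE => /negbTE ->.
rewrite eW.
set K1 : R := (k.-1)%:R.
have ek : (k.+1)%:R = K1 + 2 :> R by rewrite /K1 -natrD; congr _%:R; lia.
have hK1 : 0 < K1 by rewrite /K1 ltr0n; lia.
have hN2 : 0 < (2 ^+ n : R) by apply: exprn_gt0.
have hd0 : 0 < d by apply: lt_le_trans hd; exact: ltr01.
have hDd : 0 < d * (K1 + 2) + 2 by apply: addr_gt0 => //; apply: mulr_gt0 => //; apply: addr_gt0.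
rewrite ek.
have -> : (d * (K1 + 2) + 2) *
    (K1 * d / (d * (K1 + 2) + 2) * (K1^-1 * RT) +
     (1 - K1 * d / (d * (K1 + 2) + 2)) * ((2 ^+ n)^-1 * RS)) =
    d * RT + (2 * d + 2) / 2 ^+ n * RS.
  field; apply/and3P; split; rewrite ?gt_eqF //.
apply: lerD => //.
rewrite -subr_ge0.
have -> : (2 * d + 2) / 2 ^+ n * RS - Pb = ((d + 1) * (4 * RS) - (2 * Pb) * (2 ^+ n)) / (2 * 2 ^+ n).
  field; rewrite ?gt_eqF //.
apply: divr_ge0; last by apply: mulr_ge0 => //; apply: ltW.
by rewrite subr_ge0 -natrX mulr_natr.
Qed.

End Proofs.


Theorem mainTheorem15 (R : realFieldType) (n m k : nat) (d : R)
    (v : valuation R n m) (sel : selector R n m) :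
  (2 <= k)%N -> 1 <= d ->
  nonneg_val k v -> empty_zero v -> monotone_val k v -> strict_own k v ->
  SOS k d v -> welfare_maximizer sel ->
  (* universally ex-post IC-IR: every deterministic mechanism in the support *)
  (forall l, (1 <= l < k)%N -> ex_post_IC_IR k v (random_threshold sel v l)) /\
  (forall A, ex_post_IC_IR k v (random_sampling sel v A)) /\
  (* (d(k+1)+2)-approximation to the optimal social welfare *)
  (forall s, in_range k s -> forall X, feasible [set: 'I_n] X ->
     welfare (fun i T => v i T s) X <=
       (d * (k.+1)%:R + 2) * expected_welfare sel v k d s).
Proof.
move=> hk hd hnn he hmono _ hsos hsel; split; last split.
- exact: (RT_IC hd he hmono hsel).
- exact: (RS_IC hnn hsel).
- by move=> s hs X hX; apply: (approx hd hnn hmono hsos hsel hk hs hX).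
Qed.
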